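(* Let $m\ge4$, $3\le i\le m$, and let $p=(p_1,\dots,p_m)$ be an ordered tuple of distinct points of $\overline{\mathbf H^n_{\mathbb H}}$ with $p_1,\dots,p_i\in\partial\mathbf H^n_{\mathbb H}$ and $p_{i+1},\dots,p_m\in\mathbf H^n_{\mathbb H}$. Suppose the Gram matrix of the lift $\mathbf p=(\mathbf p_1,\dots,\mathbf p_m)$ is semi-normalized, and let $\lambda_1,\dots,\lambda_m$ be nonzero quaternions. Then the Gram matrix of the lift $\mathbf p'=(\mathbf p_1\lambda_1,\dots,\mathbf p_m\lambda_m)$ is semi-normalized if and only if $\lambda_1=\lambda_2=\cdots=\lambda_m$ and $|\lambda_1|=1$.
   Context: $\mathbb H^{n,1}$ is the right quaternionic vector space $\mathbb H^{n+1}$ with Hermitian form $\langle\mathbf z,\mathbf w\rangle=\bar w_{n+1}z_1+\bar w_2z_2+\cdots+\bar w_nz_n+\bar w_1z_{n+1}$; $\mathbf H^n_{\mathbb H}$ (resp. $\partial\mathbf H^n_{\mathbb H}$) consists of quaternionic lines of negative (resp. nonzero null) vectors, and a lift of a point is a spanning vector. The Gram matrix of a lift is $G=(g_{kj})$, $g_{kj}=\langle\mathbf p_j,\mathbf p_k\rangle$; it is semi-normalized if $g_{kk}=0$ for $k\le i$, $g_{kk}=-1$ for $k>i$, $g_{1j}=1$ for $2\le j\le i$, $|g_{23}|=1$, and $g_{1j}$ is a positive real number for $i<j\le m$. *)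

(* Defs.v *)
From HB Require Import structures.
From mathcomp Require Import all_boot all_order all_algebra.
Set Implicit Arguments. Unset Strict Implicit. Unset Printing Implicit Defensive.
Import Order.TTheory GRing.Theory Num.Theory.
Local Open Scope ring_scope.

Record quat (R : rcfType) := Quat { qr : R; qi : R; qj : R; qk : R }.

Section Quat.
Variable R : rcfType.

Definition realq (r : R) : quat R := Quat r 0 0 0.
Definition qzero : quat R := realq 0.
Definition qone : quat R := realq 1.

Definition qadd (p q : quat R) : quat R :=
  Quat (qr p + qr q) (qi p + qi q) (qj p + qj q) (qk p + qk q).

Definition qmul (p q : quat R) : quat R :=
  Quat (qr p * qr q - qi p * qi q - qj p * qj q - qk p * qk q)
       (qr p * qi q + qi p * qr q + qj p * qk q - qk p * qj q)
       (qr p * qj q - qi p * qk q + qj p * qr q + qk p * qi q)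
       (qr p * qk q + qi p * qj q - qj p * qi q + qk p * qr q).

Definition qconj (p : quat R) : quat R := Quat (qr p) (- qi p) (- qj p) (- qk p).

Definition qabs (p : quat R) : R :=
  Num.sqrt (qr p ^+ 2 + qi p ^+ 2 + qj p ^+ 2 + qk p ^+ 2).

(* vectors of H^{n,1} = H^{n+1}, coordinates z_1..z_{n+1} are indices 0..n *)
Definition qvec (n : nat) := 'I_n.+1 -> quat R.

Definition vscale n (z : qvec n) (l : quat R) : qvec n := fun a => qmul (z a) l.

Definition hform n (z w : qvec n) : quat R :=
  qadd (qmul (qconj (w ord_max)) (z ord0))
    (qadd (\big[qadd/qzero]_(k < n.+1 | (0 < (k : nat) < n)%N) qmul (qconj (w k)) (z k))
          (qmul (qconj (w ord0)) (z ord_max))).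

Definition vnonzero n (z : qvec n) : Prop := exists a, z a <> qzero.

(* z spans a point of the boundary: nonzero null vector *)
Definition null_vec n (z : qvec n) : Prop := vnonzero z /\ hform z z = qzero.

(* z spans a point of H^n_H: negative vector (<z,z> is a negative real) *)
Definition neg_vec n (z : qvec n) : Prop := exists r : R, r < 0 /\ hform z z = realq r.

Definition same_line n (z w : qvec n) : Prop := exists l : quat R, z = vscale w l.

(* Gram matrix of the lift p (points indexed 1..m): g_{kj} = <p_j, p_k> *)
Definition gram n (p : nat -> qvec n) (k j : nat) : quat R := hform (p j) (p k).

Definition semi_normalized (m i : nat) (g : nat -> nat -> quat R) : Prop :=
  [/\ (forall k, (1 <= k <= i)%N -> g k k = qzero),
      (forall k, (i < k <= m)%N -> g k k = realq (-1)),
      (forall j, (2 <= j <= i)%N -> g 1%N j = qone),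
      qabs (g 2%N 3%N) = 1 &
      (forall j, (i < j <= m)%N -> exists r : R, 0 < r /\ g 1%N j = realq r)].

End Quat.

(* Main.v *)
Require Import Defs.
From mathcomp Require Import all_boot all_order all_algebra.
From mathcomp Require Import ring lra zify.
Import Order.TTheory GRing.Theory Num.Theory.
Local Open Scope ring_scope.
Set Implicit Arguments. Unset Strict Implicit.

Section H.
Variable R : rcfType.
Implicit Types x y z u l g : quat R.

Definition qN x : R := qr x ^+ 2 + qi x ^+ 2 + qj x ^+ 2 + qk x ^+ 2.

Lemma qN_ge0 x : 0 <= qN x.
Proof. rewrite /qN; by rewrite !addr_ge0 ?sqr_ge0. Qed.

Lemma qadd_morph u l x y :
  qmul (qconj u) (qmul (qadd x y) l) =
  qadd (qmul (qconj u) (qmul x l)) (qmul (qconj u) (qmul y l)).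
Proof.
case: u l x y => [a b c d] [e f g h] [a1 b1 c1 d1] [a2 b2 c2 d2].
rewrite /qmul /qadd /qconj /=; congr Quat; ring.
Qed.

Lemma qzero_morph u l : qmul (qconj u) (qmul (qzero R) l) = qzero R.
Proof.
case: u l => [a b c d] [e f g h].
rewrite /qmul /qzero /realq /qconj /=; congr Quat; ring.
Qed.

Lemma qterm_morph u l a b :
  qmul (qconj u) (qmul (qmul (qconj a) b) l) =
  qmul (qconj (qmul a u)) (qmul b l).
Proof.
case: u l a b => [a b c d] [e f g h] [a1 b1 c1 d1] [a2 b2 c2 d2].
rewrite /qmul /qconj /=; congr Quat; ring.
Qed.

Lemma hform_scale n (z w : qvec R n) l u :
  hform (vscale z l) (vscale w u) = qmul (qconj u) (qmul (hform z w) l).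
Proof.
rewrite /hform !qadd_morph !qterm_morph; congr qadd; congr qadd.
rewrite (big_morph (fun x => qmul (qconj u) (qmul x l)) (@qadd_morph u l)
  (qzero_morph u l)).
by apply: eq_bigr => k _; rewrite qterm_morph.
Qed.

Lemma qmul_real_sq x r : qmul (qconj x) (qmul (realq r) x) = realq (r * qN x).
Proof.
case: x => [a b c d]; rewrite /qmul /qconj /realq /qN /=; congr Quat; ring.
Qed.

Lemma qN_mul3 a g b : qN (qmul (qconj a) (qmul g b)) = qN a * qN g * qN b.
Proof.
case: a g b => [a b c d] [e f g h] [a1 b1 c1 d1].
rewrite /qmul /qconj /qN /=; ring.
Qed.

Lemma qN_mul2 a b : qN (qmul (qconj a) b) = qN a * qN b.
Proof.
case: a b => [a b c d] [e f g h].
rewrite /qmul /qconj /qN /=; ring.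
Qed.

Lemma qabs_eq1 x : qabs x = 1 <-> qN x = 1.
Proof.
rewrite /qabs -/(qN x); split => h; last by rewrite h sqrtr1.
by rewrite -[qN x](sqr_sqrtr (qN_ge0 x)) h expr1n.
Qed.

Lemma qabs_qN x : qabs x = Num.sqrt (qN x). Proof. by []. Qed.

Lemma qN_zero x : qN x = 0 -> x = qzero R.
Proof.
case: x => [a b c d]; rewrite /qN /= => h.
have := sqr_ge0 a; have := sqr_ge0 b; have := sqr_ge0 c; have := sqr_ge0 d.
move=> h1 h2 h3 h4.
have ha : a ^+ 2 = 0 by lra.
have hb : b ^+ 2 = 0 by lra.
have hc : c ^+ 2 = 0 by lra.
have hd : d ^+ 2 = 0 by lra.
move/eqP: ha; move/eqP: hb; move/eqP: hc; move/eqP: hd.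
rewrite !sqrf_eq0 => /eqP-> /eqP-> /eqP-> /eqP->; by [].
Qed.

Lemma solve_y x y s : qmul (qconj x) y = realq s -> qN x = 1 ->
  y = qmul x (realq s).
Proof.
move=> <-; case: x y => [a b c d] [e f g h]; rewrite /qN /= => hN.
have E : forall t : R, t = (a^+2+b^+2+c^+2+d^+2) * t by move=> t; rewrite hN mul1r.
rewrite /qmul /qconj /=; congr Quat.
- by rewrite {1}(E e); ring.
- by rewrite {1}(E f); ring.
- by rewrite {1}(E g); ring.
- by rewrite {1}(E h); ring.
Qed.

Lemma qmul_r1 x : qmul x (realq 1) = x.
Proof. case: x => a b c d; rewrite /qmul /realq /=; congr Quat; ring. Qed.

Lemma qmul_one x : qmul (qone R) x = x.
Proof. case: x => a b c d; rewrite /qmul /qone /realq /=; congr Quat; ring. Qed.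

Lemma qN_real r : qN (realq r) = r ^+ 2.
Proof. rewrite /qN /realq /=; ring. Qed.

Lemma scal_solve x y r r' : r != 0 ->
  qmul (qconj x) (qmul (realq r) y) = realq r' ->
  qmul (qconj x) y = realq (r' / r).
Proof.
move=> r0; case: x y => [a b c d] [e f g h]; rewrite /qmul /qconj /realq /=.
case=> h1 h2 h3 h4; congr Quat.
- by rewrite -h1; field.
- apply: (mulfI r0); rewrite mulr0 -h2; ring.
- apply: (mulfI r0); rewrite mulr0 -h3; ring.
- apply: (mulfI r0); rewrite mulr0 -h4; ring.
Qed.

End H.

Theorem lemma8p5 (R : rcfType) (n m i : nat) (p : nat -> qvec R n)
  (lambda : nat -> quat R) :
  (1 <= n)%N -> (4 <= m)%N -> (3 <= i <= m)%N ->
  (forall k, (1 <= k <= i)%N -> null_vec (p k)) ->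
  (forall k, (i < k <= m)%N -> neg_vec (p k)) ->
  (forall j k, (1 <= j <= m)%N -> (1 <= k <= m)%N -> j <> k ->
     ~ same_line (p j) (p k)) ->
  semi_normalized m i (gram p) ->
  (forall k, (1 <= k <= m)%N -> lambda k <> qzero R) ->
  (semi_normalized m i (gram (fun k => vscale (p k) (lambda k))) <->
   ((forall k, (1 <= k <= m)%N -> lambda k = lambda 1%N) /\ qabs (lambda 1%N) = 1)).
Proof.
move=> _ _ /andP[i3 im] _ _ _ [G1 G2 G3 G4 G5] Hnz.
have gE : forall k j, gram (fun k => vscale (p k) (lambda k)) k j =
    qmul (qconj (lambda k)) (qmul (gram p k j) (lambda j)).
  by move=> k j; rewrite /gram hform_scale.
split.
- case=> H1 H2 H3 H4 H5.
  have h2 := H3 2%N ltac:(apply/andP; split; lia).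
  have h3 := H3 3%N ltac:(apply/andP; split; lia).
  rewrite gE G3 ?qmul_one in h2; last by apply/andP; split; lia.
  rewrite gE G3 ?qmul_one in h3; last by apply/andP; split; lia.
  have n2 := congr1 (@qN R) h2; have n3 := congr1 (@qN R) h3.
  rewrite qN_mul2 /qone qN_real expr1n in n2.
  rewrite qN_mul2 /qone qN_real expr1n in n3.
  have := H4; rewrite gE qabs_eq1 qN_mul3.
  have := G4; rewrite qabs_eq1 => ->; rewrite mulr1 => n23.
  have N1 : qN (lambda 1%N) = 1.
    have a0 := qN_ge0 (lambda 1%N).
    have e : qN (lambda 1%N) ^+ 2 = 1.
      have : (qN (lambda 1%N) * qN (lambda 2%N)) * (qN (lambda 1%N) * qN (lambda 3%N))
        = qN (lambda 1%N) ^+ 2 * (qN (lambda 2%N) * qN (lambda 3%N)) by ring.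
      by rewrite n2 n3 n23 !mulr1 => <-.
    move/eqP: e; rewrite sqrf_eq1 => /orP[/eqP //|/eqP e]; lra.
  split; last by apply/qabs_eq1.
  move=> k /andP[k1 km].
  case: (leqP k i) => ki.
    case: (ltnP 1 k) => k2; last by have -> : k = 1%N by lia.
    have hk := H3 k ltac:(apply/andP; split; lia).
    rewrite gE G3 ?qmul_one in hk; last by apply/andP; split; lia.
    by rewrite (solve_y hk N1) qmul_r1.
  have hk := H2 k ltac:(apply/andP; split; lia).
  rewrite gE G2 ?qmul_real_sq in hk; last by apply/andP; split; lia.
  have Nk : qN (lambda k) = 1.
    by case: hk => e; lra.
  have [r [r0 Gr]] := G5 k ltac:(apply/andP; split; lia).
  have [r' [r'0 Gr']] := H5 k ltac:(apply/andP; split; lia).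
  rewrite gE Gr in Gr'.
  have hs := scal_solve (lt0r_neq0 r0) Gr'.
  have s0 : 0 < r' / r by apply: divr_gt0.
  have := congr1 (@qN R) hs; rewrite qN_mul2 N1 Nk qN_real mul1r => /esym/eqP.
  rewrite sqrf_eq1 => /orP[] /eqP e; last by exfalso; lra.
  by rewrite e in hs; rewrite (solve_y hs N1) qmul_r1.
- case=> Hl Habs.
  have N1 : qN (lambda 1%N) = 1 by apply/qabs_eq1.
  split.
  + move=> k kk; rewrite gE G1 // (Hl k) ?qmul_real_sq ?mul0r //; lia.
  + move=> k kk; rewrite gE G2 // (Hl k) ?qmul_real_sq ?N1 ?mulr1 //; lia.
  + move=> j jj; rewrite gE G3 // (Hl j) ?qmul_real_sq ?N1 ?mulr1 //; lia.
  + rewrite gE qabs_qN qN_mul3 (Hl 2%N) ?(Hl 3%N) ?N1 ?mul1r ?mulr1 //; lia.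
  + move=> j jj; have [r [r0 Gr]] := G5 j jj; exists r; split => //.
    rewrite gE Gr (Hl j) ?qmul_real_sq ?N1 ?mulr1 //; lia.
Qed.
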